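(* Let $A$ be a commutative ring with unit, $X$ an alphabet, and $\star\in\mathcal{P}$. Then $(A\langle X\rangle,\star)$ is a commutative (and associative) $A$-algebra with unit $1_{X^*}$.
   Context: Conventions. $X^*$ is the free monoid on $X$, with empty word $1_{X^*}$. $A\langle X\rangle$ is the free $A$-module on $X^*$, with concatenation written by juxtaposition. $AX=\{\lambda x:\lambda\in A,\ x\in X\}$; note $0\in AX$. The class $\mathcal{P}$. $\mathcal{P}$ is the set of products $\star:A\langle X\rangle\times A\langle X\rangle\to A\langle X\rangle$ such that: (i) $\star$ is $A$-bilinear; (ii) $1_{X^*}\star w=w\star 1_{X^*}=w$ for all $w\in X^*$; (iii) for all $a,b\in X$ and $u,v\in X^*$, $au\star bv=a(u\star bv)+b(au\star v)+[a,b](u\star v)$. Here $[\cdot,\cdot]:X\times X\to AX$ is a map, extended to $AX\times AX$ by $[\lambda a,\mu b]=\lambda\mu[a,b]$, and it must satisfy $[a,b]=[b,a]$ and $[[a,b],c]=[a,[b,c]]$ for all $a,b,c\in X$. For $\lambda x\in AX$ and $P\in A\langle X\rangle$, $(\lambda x)P$ means $\lambda\, xP$. *)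

(* Defs.v *)
From HB Require Import structures.
From mathcomp Require Import all_boot all_algebra.
From Stdlib Require List.
From Stdlib Require Import ClassicalEpsilon.
Set Implicit Arguments. Unset Strict Implicit. Unset Printing Implicit Defensive.
Import GRing.Theory.
Local Open Scope ring_scope.

(* A<X>: the free A-module on X^* (words = seq X), i.e. finitely supported
   coefficient functions seq X -> A. *)
Section NCPoly.
Variables (A : comPzRingType) (X : Type).

Definition fsupp (f : seq X -> A) : Prop :=
  exists s : seq (seq X), forall w, ~ List.In w s -> f w = 0.

Record ncpoly := NCPoly { coef : seq X -> A; coef_fsupp : fsupp coef }.

Lemma fsupp0 : fsupp (fun _ => 0).
Proof. by exists [::]. Qed.
Definition nc0 : ncpoly := NCPoly fsupp0.

Lemma fsuppD (P Q : ncpoly) : fsupp (fun w => coef P w + coef Q w).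
Proof.
case: P Q => [f [s Hs]] [g [t Ht]] /=; exists (s ++ t) => w Hw.
rewrite Hs ?Ht ?addr0 // => H; apply: Hw; apply: List.in_or_app; tauto.
Qed.
Definition ncadd (P Q : ncpoly) : ncpoly := NCPoly (fsuppD P Q).

Lemma fsuppZ (c : A) (P : ncpoly) : fsupp (fun w => c * coef P w).
Proof. case: P => [f [s Hs]] /=; exists s => w Hw; by rewrite Hs ?mulr0. Qed.
Definition ncscale (c : A) (P : ncpoly) : ncpoly := NCPoly (fsuppZ c P).

Definition word_coef (u : seq X) : seq X -> A :=
  fun w => if excluded_middle_informative (w = u) then 1 else 0.
Lemma fsupp_word u : fsupp (word_coef u).
Proof.
exists [:: u] => w Hw; rewrite /word_coef.
case: excluded_middle_informative => // E; exfalso; apply: Hw; left; by [].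
Qed.
Definition ncword (u : seq X) : ncpoly := NCPoly (fsupp_word u).

Definition lcons_coef (x : X) (P : ncpoly) : seq X -> A :=
  fun w => match w with
           | [::] => 0
           | y :: w' => if excluded_middle_informative (y = x) then coef P w' else 0
           end.
Lemma fsupp_lcons x P : fsupp (lcons_coef x P).
Proof.
case: P => [f [s Hs]]; exists (List.map (cons x) s) => [[|y w]] Hw //=.
case: excluded_middle_informative => // E; subst y; apply: Hs => H.
by apply: Hw; apply: List.in_map.
Qed.
Definition nclcons (x : X) (P : ncpoly) : ncpoly := NCPoly (fsupp_lcons x P).

(* Elements of AX are represented by pairs (lambda, x), meaning lambda x;
   ax embeds them into A<X> (so that e.g. 0 x = 0 y). *)
Definition ax (p : A * X) : ncpoly := ncscale p.1 (ncword [:: p.2]).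

Definition brAX (br : X -> X -> A * X) (p q : A * X) : A * X :=
  let r := br p.2 q.2 in (p.1 * q.1 * r.1, r.2).

Definition inP (br : X -> X -> A * X) (star : ncpoly -> ncpoly -> ncpoly) : Prop :=
  (* (i) A-bilinearity *)
      (forall P Q R, star (ncadd P Q) R = ncadd (star P R) (star Q R)) /\
      (forall P Q R, star P (ncadd Q R) = ncadd (star P Q) (star P R)) /\
      (forall c P Q, star (ncscale c P) Q = ncscale c (star P Q)) /\
      (forall c P Q, star P (ncscale c Q) = ncscale c (star P Q)) /\
      (* (ii) unit on words *)
      (forall w, star (ncword [::]) (ncword w) = ncword w /\
                 star (ncword w) (ncword [::]) = ncword w) /\
      (* (iii) recursion *)
      (forall (a b : X) (u v : seq X),
          star (ncword (a :: u)) (ncword (b :: v)) =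
          ncadd (nclcons a (star (ncword u) (ncword (b :: v))))
            (ncadd (nclcons b (star (ncword (a :: u)) (ncword v)))
               (ncscale (br a b).1 (nclcons (br a b).2 (star (ncword u) (ncword v)))))) /\
      (forall a b, ax (br a b) = ax (br b a)) /\
      (forall a b c, ax (brAX br (br a b) (1, c)) = ax (brAX br (1, a) (br b c))).

End NCPoly.

(* Main.v *)
Require Import Defs.
From mathcomp Require Import all_boot all_algebra ring zify.
From Stdlib Require Import ProofIrrelevance FunctionalExtensionality ClassicalEpsilon.
Set Implicit Arguments. Unset Strict Implicit. Unset Printing Implicit Defensive.
Import GRing.Theory.
Local Open Scope ring_scope.

Section Basics.
Variables (A : comPzRingType) (X : Type).
Notation N := (ncpoly A X).
Notation W := (@ncword A X).

Lemma ncext (P Q : N) : (forall w, coef P w = coef Q w) -> P = Q.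
Proof.
case: P Q => f Hf [g Hg] /= E.
have E' : f = g by apply: functional_extensionality.
subst g; by rewrite (proof_irrelevance _ Hf Hg).
Qed.

Lemma coefD (P Q : N) w : coef (ncadd P Q) w = coef P w + coef Q w.
Proof. by []. Qed.
Lemma coefZ c (P : N) w : coef (ncscale c P) w = c * coef P w.
Proof. by []. Qed.
Lemma coef0 w : coef (nc0 A X) w = 0.
Proof. by []. Qed.

Lemma lconsD x (P Q : N) : nclcons x (ncadd P Q) = ncadd (nclcons x P) (nclcons x Q).
Proof.
apply: ncext => [[|y w]] /=; first by rewrite addr0.
by destruct (excluded_middle_informative (y = x)) => /=; rewrite ?addr0.
Qed.
Lemma lconsZ x c (P : N) : nclcons x (ncscale c P) = ncscale c (nclcons x P).
Proof.
apply: ncext => [[|y w]] /=; first by rewrite mulr0.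
by destruct (excluded_middle_informative (y = x)) => /=; rewrite ?mulr0.
Qed.
Lemma lcons0 x : nclcons x (nc0 A X) = nc0 A X.
Proof.
apply: ncext => [[|y w]] //=.
by destruct (excluded_middle_informative (y = x)).
Qed.
Lemma lcons_word x u : nclcons x (W u) = W (x :: u).
Proof.
apply: ncext => [[|y w]] /=; rewrite /word_coef.
  by destruct (excluded_middle_informative ([::] = x :: u)).
destruct (excluded_middle_informative (y = x)) as [E1|E1];
destruct (excluded_middle_informative (y :: w = x :: u)) as [E2|E2] => //=.
- case: E2 => _ ->; by destruct (excluded_middle_informative (u = u)).
- destruct (excluded_middle_informative (w = u)) as [E3|E3] => //=.
  by case: E2; rewrite E1 E3.
- by case: E2 => E2; case: E1.
Qed.

Lemma scale0 (P : N) : ncscale 0 P = nc0 A X.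
Proof. by apply: ncext => w; rewrite coefZ mul0r. Qed.

Lemma nc_ind (Phi : N -> Prop) : Phi (nc0 A X) ->
  (forall c u P, Phi P -> Phi (ncadd (ncscale c (W u)) P)) -> forall P, Phi P.
Proof.
move=> H0 HS P; case: (coef_fsupp P) => s.
elim: s P => [|u s IH] P Hs.
  have -> : P = nc0 A X by apply: ncext => w; apply: Hs.
  done.
pose f w := if excluded_middle_informative (w = u) then 0 else coef P w.
have fs : fsupp f.
  exists s => w Hw; rewrite /f; destruct (excluded_middle_informative (w = u)) as [E|E] => //=.
  by apply: Hs => -[E'|E']; [apply: E|apply: Hw].
have -> : P = ncadd (ncscale (coef P u) (W u)) (NCPoly fs).
  apply: ncext => w; rewrite coefD coefZ /= /f /word_coef.
  destruct (excluded_middle_informative (w = u)) as [E|E] => /=.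
    by subst w; rewrite mulr1 addr0.
  by rewrite mulr0 add0r.
apply: HS; apply: IH => w Hw /=; rewrite /f.
destruct (excluded_middle_informative (w = u)) as [E|E] => //=.
by apply: Hs => -[E'|E']; [apply: E|apply: Hw].
Qed.

Lemma scaleD c (P Q : N) : ncscale c (ncadd P Q) = ncadd (ncscale c P) (ncscale c Q).
Proof. by apply: ncext => w; rewrite !coefD !coefZ mulrDr. Qed.
Lemma scaleM c d (P : N) : ncscale (c * d) P = ncscale c (ncscale d P).
Proof. by apply: ncext => w; rewrite !coefZ mulrA. Qed.

Lemma axL (p q : A * X) : ax p = ax q ->
  forall T : N, ncscale p.1 (nclcons p.2 T) = ncscale q.1 (nclcons q.2 T).
Proof.
case: p q => [l x] [m y] /= E T.
have Ex := f_equal (fun P => coef P [:: x]) E.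
have Ey := f_equal (fun P => coef P [:: y]) E.
rewrite /ax /= /word_coef in Ex Ey; move: Ex Ey.
destruct (excluded_middle_informative ([:: x] = [:: x])) as [e0|F] => /=; last by exfalso; apply F.
destruct (excluded_middle_informative ([:: y] = [:: y])) as [e1|F] => /=; last by exfalso; apply F.
destruct (excluded_middle_informative ([:: x] = [:: y])) as [Exy|Nxy] => /=.
  case: Exy => <-; rewrite /= !mulr1 => -> _ //.
destruct (excluded_middle_informative ([:: y] = [:: x])) as [Eyx|e2] => /=.
  by exfalso; apply Nxy; rewrite Eyx.
rewrite /= !mulr1 !mulr0 => -> <-.
by rewrite !scale0.
Qed.

End Basics.

Section Main.
Variables (A : comPzRingType) (X : Type).
Notation N := (ncpoly A X).
Notation W := (@ncword A X).
Variables (br : X -> X -> A * X) (star : N -> N -> N).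
Hypothesis HP : inP br star.

Lemma starDl P Q R : star (ncadd P Q) R = ncadd (star P R) (star Q R).
Proof. by case: HP. Qed.
Lemma starDr P Q R : star P (ncadd Q R) = ncadd (star P Q) (star P R).
Proof. by case: HP => _ []. Qed.
Lemma starZl c P Q : star (ncscale c P) Q = ncscale c (star P Q).
Proof. by case: HP => _ [] _ []. Qed.
Lemma starZr c P Q : star P (ncscale c Q) = ncscale c (star P Q).
Proof. by case: HP => _ [] _ [] _ []. Qed.
Lemma unitW w : star (W [::]) (W w) = W w /\ star (W w) (W [::]) = W w.
Proof. by case: HP => _ [] _ [] _ [] _ [] H _; apply: H. Qed.
Lemma Hrec a b u v : star (W (a :: u)) (W (b :: v)) =
          ncadd (nclcons a (star (W u) (W (b :: v))))
            (ncadd (nclcons b (star (W (a :: u)) (W v)))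
               (ncscale (br a b).1 (nclcons (br a b).2 (star (W u) (W v))))).
Proof. by case: HP => _ [] _ [] _ [] _ [] _ [] H _; apply: H. Qed.
Lemma Hsym a b : ax (br a b) = ax (br b a).
Proof. by case: HP => _ [] _ [] _ [] _ [] _ [] _ [] H _; apply: H. Qed.
Lemma Hassoc a b c : ax (brAX br (br a b) (1, c)) = ax (brAX br (1, a) (br b c)).
Proof. by case: HP => _ [] _ [] _ [] _ [] _ [] _ [] _ H; apply: H. Qed.

Lemma star0l Q : star (nc0 A X) Q = nc0 A X.
Proof. by rewrite -(scale0 (nc0 A X)) starZl !scale0. Qed.
Lemma star0r Q : star Q (nc0 A X) = nc0 A X.
Proof. by rewrite -(scale0 (nc0 A X)) starZr !scale0. Qed.

Ltac ncnorm := do 4 (rewrite ?starDl ?starDr ?starZl ?starZr ?star0l ?star0r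
   ?lconsD ?lconsZ ?lcons0 ?scaleD).
Ltac ncsolve := apply: ncext => ?; rewrite ?coefD ?coefZ ?coef0; ring.

Lemma unit_l P : star (W [::]) P = P.
Proof.
elim/(@nc_ind A X): P => [|c u P IH]; first by rewrite star0r.
by rewrite starDr starZr IH (unitW u).1.
Qed.
Lemma unit_r P : star P (W [::]) = P.
Proof.
elim/(@nc_ind A X): P => [|c u P IH]; first by rewrite star0l.
by rewrite starDl starZl IH (unitW u).2.
Qed.


Lemma comm_word n u v : (size u + size v < n)%N ->
  star (W u) (W v) = star (W v) (W u).
Proof.
elim: n u v => [|n IH] u v //.
case: u => [|a u]; first by rewrite (unitW v).1 (unitW v).2.
case: v => [|b v]; first by rewrite (unitW _).1 (unitW _).2.
move=> /= Hn.
rewrite (Hrec a b u v) (Hrec b a v u).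
rewrite (IH u (b :: v)); last by move: Hn => /=; lia.
rewrite (IH (a :: u) v); last by move: Hn => /=; lia.
rewrite (IH u v); last by move: Hn => /=; lia.
rewrite (axL (Hsym a b)).
ncsolve.
Qed.

Lemma comm P Q : star P Q = star Q P.
Proof.
have H1 : forall w P, star P (W w) = star (W w) P.
  move=> w; elim/(@nc_ind A X) => [|c u P1 IH]; first by rewrite star0l star0r.
  by rewrite starDl starDr starZl starZr IH (comm_word (n := (size u + size w).+1)).
elim/(@nc_ind A X): Q => [|c u Q IH]; first by rewrite star0l star0r.
by rewrite starDl starDr starZl starZr IH H1.
Qed.

Lemma rec_ww a b u v : star (nclcons a (W u)) (nclcons b (W v)) =
  ncadd (nclcons a (star (W u) (nclcons b (W v))))
   (ncadd (nclcons b (star (nclcons a (W u)) (W v)))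
     (ncscale (br a b).1 (nclcons (br a b).2 (star (W u) (W v))))).
Proof. by rewrite !lcons_word; apply: Hrec. Qed.

Lemma rec_wl a b u Q : star (nclcons a (W u)) (nclcons b Q) =
  ncadd (nclcons a (star (W u) (nclcons b Q)))
   (ncadd (nclcons b (star (nclcons a (W u)) Q))
     (ncscale (br a b).1 (nclcons (br a b).2 (star (W u) Q)))).
Proof.
elim/(@nc_ind A X): Q => [|c v Q IH]; first by ncnorm; ncsolve.
ncnorm. rewrite rec_ww IH. ncnorm. ncsolve.
Qed.

Lemma rec_gen a b P Q : star (nclcons a P) (nclcons b Q) =
  ncadd (nclcons a (star P (nclcons b Q)))
   (ncadd (nclcons b (star (nclcons a P) Q))
     (ncscale (br a b).1 (nclcons (br a b).2 (star P Q)))).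
Proof.
elim/(@nc_ind A X): P Q => [|c u P IH] Q; first by ncnorm; ncsolve.
ncnorm. rewrite rec_wl IH. ncnorm. ncsolve.
Qed.


Lemma rec_left a c P w : star (nclcons a P) (W (c :: w)) =
  ncadd (nclcons a (star P (W (c :: w))))
   (ncadd (nclcons c (star (nclcons a P) (W w)))
     (ncscale (br a c).1 (nclcons (br a c).2 (star P (W w))))).
Proof. by rewrite -[W (c :: w)]lcons_word rec_gen. Qed.

Lemma rec_right a u b Q : star (W (a :: u)) (nclcons b Q) =
  ncadd (nclcons a (star (W u) (nclcons b Q)))
   (ncadd (nclcons b (star (W (a :: u)) Q))
     (ncscale (br a b).1 (nclcons (br a b).2 (star (W u) Q)))).
Proof. by rewrite -[W (a :: u)]lcons_word rec_gen. Qed.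

Lemma assoc_word n u v w : (size u + size v + size w < n)%N ->
  star (star (W u) (W v)) (W w) = star (W u) (star (W v) (W w)).
Proof.
elim: n u v w => [|n IH] u v w //.
case: u => [|a u]; first by rewrite !unit_l.
case: v => [|b v]; first by rewrite unit_r unit_l.
case: w => [|c w]; first by rewrite !unit_r.
move=> Hn.
have Ec := IH (a :: u) (b :: v) w ltac:(move: Hn => /=; lia).
rewrite (Hrec a b u v) in Ec; ncnorm.
rewrite (Hrec a b u v) (Hrec b c v w).
ncnorm.
rewrite !rec_left !rec_right.
ncnorm.
rewrite (IH u (b :: v) (c :: w)); last by move: Hn => /=; lia.
rewrite (IH (a :: u) v (c :: w)); last by move: Hn => /=; lia.
rewrite (IH u (b :: v) w); last by move: Hn => /=; lia.
rewrite (IH (a :: u) v w); last by move: Hn => /=; lia.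
rewrite (IH u v (c :: w)); last by move: Hn => /=; lia.
rewrite (IH u v w); last by move: Hn => /=; lia.
rewrite (Hrec b c v w).
rewrite -Ec.
ncnorm.
have Ea := axL (Hassoc a b c) (star (W u) (star (W v) (W w))).
rewrite /brAX /= mulr1 mul1r !scaleM in Ea.
rewrite Ea.
ncsolve.
Qed.


Lemma assoc P Q R : star (star P Q) R = star P (star Q R).
Proof.
have H1 : forall v w P, star (star P (W v)) (W w) = star P (star (W v) (W w)).
  move=> v w; elim/(@nc_ind A X) => [|c u P1 IH]; first by rewrite !star0l.
  rewrite !starDl !starZl IH.
  by rewrite (assoc_word (n := (size u + size v + size w).+1)).
have H2 : forall w P Q, star (star P Q) (W w) = star P (star Q (W w)).
  move=> w P1; elim/(@nc_ind A X) => [|c u Q1 IH]; first by rewrite star0r !star0l star0r.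
  by ncnorm; rewrite IH H1.
elim/(@nc_ind A X): R => [|c u R IH]; first by rewrite !star0r.
by ncnorm; rewrite IH H2.
Qed.

End Main.

Theorem mainTheorem2 (A : comPzRingType) (X : Type)
    (star : ncpoly A X -> ncpoly A X -> ncpoly A X) :
  (exists br : X -> X -> A * X, inP br star) ->
  [/\ (forall P Q, star P Q = star Q P),
      (forall P Q R, star (star P Q) R = star P (star Q R)) &
      (forall P, star (ncword A [::]) P = P /\ star P (ncword A [::]) = P)].
Proof.
case=> br HP; split.
- exact: comm HP.
- exact: assoc HP.
- move=> P; split; [exact: (unit_l HP P) | exact: (unit_r HP P)].
Qed.
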